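(* Consider a Utility Maximization problem in the MPOI world with ground set $J$, downward-closed constraints $\mathcal{F}\subseteq 2^J$, semiadditive objective $f(I,x)=\sum_{i\in I}x_i+h(I)$, and Markov systems $(S_i)_{i\in J}$ with non-negative destination values. Let $\mathrm{OPT}$ be the utility of an optimal strategy. Then $$\mathrm{OPT}\le \mathbb{E}_{\sigma}\Big[\max_{I\in\mathcal{F}} f\big(I,Y(\sigma)\big)\Big],$$ where $\sigma=(\sigma_i)_{i\in J}$ is a random trajectory profile in which each $S_i$ is run independently from $s_i$ until it reaches a destination state, and $Y(\sigma)=(Y(\sigma_i))_{i\in J}$ is the vector of prevailing costs.
   Context: A Markov system $S=(V,P,s,T,\pi,r)$ consists of a Markov chain on a finite state space $V$ with transition matrix $P=(p_{u,v})$, a starting state $s$, a set $T\subseteq V$ of absorbing destination states, prices $\pi^u\ge0$ for $u\in V\setminus T$, and values $r^t\in\mathbb{R}$ for $t\in T$; every state reaches some destination state. MPOI game / Utility Maximization: each $S_i$ starts at $s_i$; at each step the player either advances some $S_i$ from its current non-destination state $u$, paying $\pi_i^u$ (the state then moves randomly according to $P_i$), or ends the game by selecting a set $I\in\mathcal{F}$ of ready elements (elements whose Markov system is in a destination state). $\mathcal{F}$ is downward-closed and all values are non-negative. The utility of an adaptive strategy is $\mathbb{E}[f(I,(r_i^{\mathrm{dest}(\sigma_i)})_{i\in I})-\text{total price paid}]$, where $\mathrm{dest}(\sigma_i)$ is the destination state reached by $S_i$. Grade: for a Markov system $S$ and $\tau\in\mathbb{R}$, the $\tau$-penalized game from state $v$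 is: at each move the player may Halt (game ends) or Play; Play at a non-destination state $v$ pays $\pi^v$ and moves according to $P$; Play at a destination state $v$ gives the player $r^v-\tau$ and ends the game. Let $U^v(\tau)$ be the optimal expected (value minus price) starting from $v$. The grade of $v$ is $\tau^v=\sup\{\tau\in\mathbb{R}: U^v(\tau)>0\}$; $\tau_i^v$ denotes the grade of $v$ in $S_i$. Prevailing cost: for a trajectory $\sigma_i$ of $S_i$, $Y(\sigma_i)=\min_{v\in\sigma_i}\tau_i^v$. *)

(* Defs.v *)
From HB Require Import structures.
From mathcomp Require Import all_boot all_order all_algebra.
From mathcomp Require Import all_classical all_reals all_analysis.
Import Order.TTheory GRing.Theory Num.Theory.
Import numFieldNormedType.Exports.
Local Open Scope ring_scope.

Record MarkovSystem (R : Type) := MkMS {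
  ms_state : finType;
  ms_P : ms_state -> ms_state -> R;
  ms_start : ms_state;
  ms_dest : {set ms_state};
  ms_price : ms_state -> R;                    (* pi^u, used for u \notin T *)
  ms_value : ms_state -> R                     (* r^t, used for t \in T *)
}.

Arguments ms_state {R}. Arguments ms_P {R}. Arguments ms_start {R}.
Arguments ms_dest {R}. Arguments ms_price {R}. Arguments ms_value {R}.

Section Defs.
Variable R : realType.

Definition markov_system (M : MarkovSystem R) : Prop :=
  [/\ (forall u w, 0 <= ms_P M u w),
      (forall u, \sum_(w : ms_state M) ms_P M u w = 1),
      (forall t, t \in ms_dest M -> ms_P M t t = 1),
      (forall u, u \notin ms_dest M -> 0 <= ms_price M u) &
      (forall u, exists2 t, t \in ms_dest M &
          connect [rel a b | 0 < ms_P M a b] u t)].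

(* Strategies (decision trees) in the tau-penalized game: Halt or Play, the
   continuation after Play depending on the new state. *)
Inductive pstrat (V : Type) : Type :=
  | PHalt : pstrat V
  | PPlay : (V -> pstrat V) -> pstrat V.
Arguments PHalt {V}. Arguments PPlay {V}.

Fixpoint pval (M : MarkovSystem R) (tau : R) (sg : pstrat (ms_state M))
    (v : ms_state M) : R :=
  match sg with
  | PHalt => 0
  | PPlay k => if v \in ms_dest M then ms_value M v - tau
               else - ms_price M v +
                    \sum_(w : ms_state M) ms_P M v w * pval M tau (k w) w
  end.

Definition Uopt (M : MarkovSystem R) (tau : R) (v : ms_state M) : R :=
  sup [set pval M tau sg v | sg in [set: pstrat (ms_state M)]]%classic.

Definition grade (M : MarkovSystem R) (v : ms_state M) : R :=
  sup [set tau : R | 0 < Uopt M tau v]%classic.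

Fixpoint pathP (M : MarkovSystem R) (v : ms_state M) (p : seq (ms_state M)) : R :=
  match p with
  | [::] => 1
  | w :: p' => ms_P M v w * pathP M w p'
  end.

Definition prevailing (M : MarkovSystem R) (v : ms_state M) (p : seq (ms_state M)) : R :=
  \big[Num.min/grade M v]_(w <- p) grade M w.

Variable J : finType.

Definition downward_closed (F : {set {set J}}) : Prop :=
  forall I I' : {set J}, I \in F -> I' \subset I -> I' \in F.

Definition semiadd (h : {set J} -> R) (I : {set J}) (y : J -> R) : R :=
  \sum_(i in I) y i + h I.

Definition maxF (F : {set {set J}}) (h : {set J} -> R) (y : J -> R) : R :=
  \big[Num.max/semiadd h (finset.set0 : {set J}) y]_(I in F) semiadd h I y.

(* E over the trajectory profile where each S_i is run independently for n
   steps from s_i (destinations are absorbing, so for n -> oo this is the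
   trajectory run until it reaches a destination). *)
Definition exp_prevailing_n (S : J -> MarkovSystem R) (F : {set {set J}})
    (h : {set J} -> R) (n : nat) : R :=
  \sum_(p : {dffun forall i : J, n.-tuple (ms_state (S i))})
     (\prod_(i : J) pathP (S i) (ms_start (S i)) (p i)) *
     maxF F h (fun i => prevailing (S i) (ms_start (S i)) (p i)).

Definition exp_prevailing (S : J -> MarkovSystem R) (F : {set {set J}})
    (h : {set J} -> R) : R :=
  limn (exp_prevailing_n S F h).

(* Adaptive strategies as decision trees: Stop selecting I, or advance S_i and
   continue depending on the new state of S_i. *)
Inductive strat (V : J -> Type) : Type :=
  | SStop : {set J} -> strat V
  | SAdv : forall i : J, (V i -> strat V) -> strat V.
Arguments SStop {V}. Arguments SAdv {V}.

Definition jstate (S : J -> MarkovSystem R) := forall i : J, ms_state (S i).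

Fixpoint svalid (S : J -> MarkovSystem R) (F : {set {set J}})
    (sg : strat (fun i => ms_state (S i))) (x : jstate S) : Prop :=
  match sg with
  | SStop A => A \in F /\ (forall i, i \in A -> x i \in ms_dest (S i))
  | SAdv i k => x i \notin ms_dest (S i) /\
      (forall w, 0 < ms_P (S i) (x i) w -> svalid S F (k w) (@eqtype.dfwith J (fun j => ms_state (S j)) x i w))
  end.

Fixpoint sutil (S : J -> MarkovSystem R) (h : {set J} -> R)
    (sg : strat (fun i => ms_state (S i))) (x : jstate S) : R :=
  match sg with
  | SStop A => semiadd h A (fun i => ms_value (S i) (x i))
  | SAdv i k => - ms_price (S i) (x i) +
      \sum_(w : ms_state (S i)) ms_P (S i) (x i) w * sutil S h (k w) (@eqtype.dfwith J (fun j => ms_state (S j)) x i w)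
  end.

Definition jstart (S : J -> MarkovSystem R) : jstate S := fun i => ms_start (S i).

End Defs.

Arguments markov_system {R}. Arguments pval {R}. Arguments Uopt {R}.
Arguments grade {R}. Arguments pathP {R}. Arguments prevailing {R}.
Arguments downward_closed {J}. Arguments semiadd {R J}. Arguments maxF {R J}.
Arguments exp_prevailing_n {R J}. Arguments exp_prevailing {R J}.
Arguments jstate {R J}. Arguments svalid {R J}. Arguments sutil {R J}.
Arguments jstart {R J}.

(* Main.v *)
Require Import Defs.
From HB Require Import structures.
From mathcomp Require Import all_boot all_order all_algebra.
From mathcomp Require Import all_classical all_reals all_analysis.
From mathcomp Require Import lra.
Import Order.TTheory GRing.Theory Num.Theory.
Import numFieldNormedType.Exports.
Local Open Scope ring_scope.

Section Gen.
Variable R : realType.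

Lemma D0 (I : finType) (T_ : I -> finType) (F : forall i, T_ i -> R) :
  \sum_(p : {dffun forall i, T_ i}) \prod_i F i (p i) = \prod_i \sum_(a : T_ i) F i a.
Proof.
pose P_ := fun i => [ffun a : T_ i => F i a].
rewrite (reindex (@dffun_of_fprod I T_)); last exact/onW_bij/dffun_of_fprod_bij.
have -> : \sum_(t : fprod T_) \prod_i F i (dffun_of_fprod t i)
   = \sum_(t : fprod T_) \prod_(i in I) P_ i (t i).
  by apply: eq_bigr => t _; apply: eq_bigr => i _; rewrite !ffunE.
rewrite (@big_fprod R 0 1 *%R +%R I T_ P_).
rewrite -(bigA_distr_big_dep (tagged_with (fun x : I => T_ x)) (fun i j => untag 0 (P_ i) j)).
apply: eq_bigr => i _.
rewrite (big_tag (fun i a => F i a)).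
apply: eq_big => // j _; rewrite /untag; case: eqP => // e; by rewrite /P_ ffunE.
Qed.

Lemma Dcond (I : finType) (T_ : I -> finType) (P : forall i, pred (T_ i))
   (F : forall i, T_ i -> R) :
  \sum_(p : {dffun forall i, T_ i} | [forall i, P i (p i)]) \prod_i F i (p i)
  = \prod_i \sum_(a | P i a) F i a.
Proof.
rewrite big_mkcond /=.
transitivity (\sum_(p : {dffun forall i, T_ i}) \prod_i (if P i (p i) then F i (p i) else 0)).
  apply: eq_bigr => p _; case: (boolP [forall i, P i (p i)]) => [/forallP H|].
    by apply: eq_bigr => i _; rewrite H.
  rewrite negb_forall => /existsP [i Hi].
  by rewrite (bigD1 i) //= (negbTE Hi) mul0r.
rewrite (@D0 I T_ (fun i a => if P i a then F i a else 0)).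
apply: eq_bigr => i _; rewrite [RHS]big_mkcond /=. by apply: eq_bigr.
Qed.

Lemma PF (I : finType) (A B : I -> finType) (phi : forall i, A i -> B i)
   (mu : forall i, A i -> R) (G : {dffun forall i, B i} -> R) :
  \sum_(p : {dffun forall i, A i}) (\prod_i mu i (p i)) * G (finfun (fun i => phi i (p i)))
  = \sum_(p' : {dffun forall i, B i}) (\prod_i \sum_(a | phi i a == p' i) mu i a) * G p'.
Proof.
rewrite (partition_big (fun p : {dffun forall i, A i} =>
    (finfun (fun i => phi i (p i)) : {dffun forall i, B i})) predT) //=.
apply: eq_bigr => p' _.
rewrite -(@Dcond I A (fun i a => phi i a == p' i) mu) mulr_suml.
apply: eq_big => p.
  apply/eqP/forallP => [<- i|H]; first by rewrite ffunE.
  by apply/ffunP => i; rewrite ffunE; exact/eqP.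
by move=> /eqP ->.
Qed.

Definition upd (I : finType) (A : I -> finType) (p : {dffun forall i, A i}) (i : I) (q : A i)
  : {dffun forall i, A i} := finfun (dfwith (fun j => p j) i q).
Arguments upd {I A} p {i} q.

Lemma updE_in (I : finType) (A : I -> finType) (p : {dffun forall i, A i}) i q :
  upd p q i = q.
Proof. by rewrite ffunE; apply: dfwith_in. Qed.

Lemma updE_out (I : finType) (A : I -> finType) (p : {dffun forall i, A i}) i (q : A i) j :
  i != j -> upd p q j = p j.
Proof. by move=> ne; rewrite ffunE; apply: dfwith_out. Qed.

Lemma upd_id (I : finType) (A : I -> finType) (p : {dffun forall i, A i}) i :
  upd p (p i) = p.
Proof.
apply/ffunP => j; case: (eqVneq i j) => [<-|ne]; first by rewrite updE_in.
by rewrite updE_out.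
Qed.

Lemma upd_upd (I : finType) (A : I -> finType) (p : {dffun forall i, A i}) i (q q' : A i) :
  upd (upd p q) q' = upd p q'.
Proof.
apply/ffunP => j; case: (eqVneq i j) => [<-|ne]; first by rewrite !updE_in.
by rewrite !updE_out.
Qed.

Lemma SL (I : finType) (A : I -> finType) i (q0 : A i) (X : {dffun forall i, A i} -> R) :
  \sum_(p : {dffun forall i, A i}) X p = \sum_(p : {dffun forall i, A i} | p i == q0) \sum_(q : A i) X (upd p q).
Proof.
rewrite (partition_big (fun p : {dffun forall i, A i} => p i) predT) //=.
rewrite exchange_big /=; apply: eq_bigr => q _.
rewrite (reindex_onto (fun p => upd p q) (fun p => upd p q0)); last first.
  by move=> p /eqP <-; rewrite upd_upd upd_id.
apply: eq_bigl => p; rewrite updE_in eqxx /= upd_upd.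
apply/eqP/eqP => [<-|<-]; first by rewrite updE_in.
by rewrite upd_id.
Qed.

Lemma TC (T : finType) n (F : n.+1.-tuple T -> R) :
  \sum_(q : n.+1.-tuple T) F q = \sum_(u : T) \sum_(q : n.-tuple T) F [tuple of u :: q].
Proof.
rewrite pair_big /=.
rewrite (reindex (fun uq : T * n.-tuple T => [tuple of uq.1 :: uq.2])) //=.
apply: onW_bij; exists (fun q : n.+1.-tuple T => (thead q, [tuple of behead q])).
  by move=> [u q] /=; rewrite theadE; congr pair; apply: val_inj.
by move=> q /=; rewrite [RHS]tuple_eta.
Qed.

End Gen.
Arguments D0 {R}. Arguments Dcond {R}. Arguments PF {R}. Arguments SL {R I A i}. Arguments TC {R T n}.
Arguments upd {I A} p {i} q. Arguments updE_in {I A} p {i} q. Arguments updE_out {I A} p {i} q j. Arguments upd_id {I A} p i. Arguments upd_upd {I A} p {i} q q'.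
Lemma trunc_subproof (T : Type) n (q : n.+1.-tuple T) : size (take n q) == n.
Proof. by rewrite size_take size_tuple ltnSn /= eqxx. Qed.
Definition trunc (T : Type) n (q : n.+1.-tuple T) : n.-tuple T := Tuple (@trunc_subproof T n q).
Arguments trunc {T n} q.

Section Sys.
Variable R : realType.
Variable M : MarkovSystem R.
Hypothesis HM : markov_system M.
Local Notation V := (ms_state M).
Local Notation P := (ms_P M).

Lemma P_ge0 u w : 0 <= P u w. Proof. by case: HM. Qed.
Lemma P_sum1 u : \sum_w P u w = 1. Proof. by case: HM. Qed.
Lemma P_abs t : t \in ms_dest M -> P t t = 1. Proof. by case: HM => _ _ H _ _; apply: H. Qed.
Lemma price_ge0 u : u \notin ms_dest M -> 0 <= ms_price M u. Proof. by case: HM => _ _ _ H _; apply: H. Qed.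

Lemma P_dest t u : t \in ms_dest M -> u != t -> P t u = 0.
Proof.
move=> Ht ne.
have := P_sum1 t; rewrite (bigD1 t) //= P_abs // => H.
have H0 : \sum_(w | w != t) P t w = 0 by apply: (addrI 1); rewrite addr0.
exact: (psumr_eq0P (fun w _ => P_ge0 t w) H0).
Qed.

Definition pmin (m : R) (s : seq V) : R := \big[Num.min/m]_(w <- s) grade M w.

Lemma pmin_cons m u s : pmin m (u :: s) = Num.min (grade M u) (pmin m s).
Proof. by rewrite /pmin big_cons. Qed.
Lemma pmin_nil m : pmin m [::] = m.
Proof. by rewrite /pmin big_nil. Qed.

Lemma pmin_le m s : pmin m s <= m.
Proof.
elim: s => [|u s IH]; first by rewrite pmin_nil.
by rewrite pmin_cons ge_min IH orbT.
Qed.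

Lemma pmin_minbase m a s : pmin (Num.min m a) s = Num.min a (pmin m s).
Proof.
elim: s => [|u s IH]; first by rewrite !pmin_nil minC.
by rewrite !pmin_cons IH minCA.
Qed.

Lemma pmin_take m s k : pmin m s <= pmin m (take k s).
Proof.
elim: s k => [|u s IH] [|k] //=; rewrite ?pmin_nil ?pmin_le //.
by rewrite !pmin_cons; apply: le_min2.
Qed.

Lemma pmin_const m t s : (forall u, u \in s -> u = t) -> m <= grade M t -> pmin m s = m.
Proof.
elim: s => [|u s IH] Hs Hm; first by rewrite pmin_nil.
rewrite pmin_cons IH //; last by move=> v Hv; apply: Hs; rewrite in_cons Hv orbT.
by rewrite (Hs u (mem_head _ _)); apply: min_r.
Qed.

Lemma pathP_ge0 x s : 0 <= Defs.pathP M x s.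
Proof.
elim: s x => [|u s IH] x /=; first exact: ler01.
by apply: mulr_ge0; [exact: P_ge0 | exact: IH].
Qed.

Lemma pathP_dest t s : t \in ms_dest M -> Defs.pathP M t s != 0 -> forall u, u \in s -> u = t.
Proof.
elim: s => [|u s IH] //= Ht.
case: (eqVneq u t) => [->|ne]; last by rewrite P_dest // mul0r eqxx.
rewrite P_abs // mul1r => Hp v; rewrite in_cons => /orP [/eqP -> //|]; exact: IH.
Qed.

Lemma sum_pathP n x : \sum_(q : n.-tuple V) Defs.pathP M x q = 1.
Proof.
elim: n x => [|n IH] x.
  rewrite (big_pred1 [tuple]) // => q; rewrite [q]tuple0; by apply/esym/eqP.
have := @TC R V n (fun q => Defs.pathP M x q). move=> ->. rewrite -(P_sum1 x); apply: eq_bigr => u _ /=.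
by rewrite -mulr_sumr IH mulr1.
Qed.

Lemma TR n x (H : seq V -> R) :
  \sum_(q : n.+1.-tuple V) Defs.pathP M x q * H (take n q)
  = \sum_(q : n.-tuple V) Defs.pathP M x q * H q.
Proof.
elim: n x H => [|n IH] x H.
  rewrite [RHS](big_pred1 [tuple]); last by move=> q; rewrite [q]tuple0; apply/esym/eqP.
  transitivity (\sum_(q : 1.-tuple V) Defs.pathP M x q * H [::]).
    by apply: eq_bigr => q _; rewrite take0.
  by rewrite -mulr_suml sum_pathP /= mul1r.
rewrite (TC (fun q => Defs.pathP M x q * H (take n.+1 q))).
rewrite (TC (fun q => Defs.pathP M x q * H q)); apply: eq_bigr => u _ /=.
have E := IH u (fun s => H (u :: s)); rewrite /= in E.
transitivity (P x u * \sum_(q : n.+1.-tuple V) Defs.pathP M u q * H (u :: take n q)).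
  by rewrite mulr_sumr; apply: eq_bigr => q _; rewrite mulrA.
rewrite E mulr_sumr; apply: eq_bigr => q _; by rewrite mulrA.
Qed.

Lemma SS n x m (l : R -> R) : {homo l : a b / a <= b} ->
  \sum_w P x w * \sum_(q : n.-tuple V) Defs.pathP M w q * l (pmin (Num.min m (grade M w)) q)
  <= \sum_(q : n.-tuple V) Defs.pathP M x q * l (pmin m q).
Proof.
move=> hl.
have -> : \sum_w P x w * \sum_(q : n.-tuple V) Defs.pathP M w q * l (pmin (Num.min m (grade M w)) q)
  = \sum_(q : n.+1.-tuple V) Defs.pathP M x q * l (pmin m q).
  rewrite (TC (fun q => Defs.pathP M x q * l (pmin m q))).
  apply: eq_bigr => w _; rewrite mulr_sumr; apply: eq_bigr => q _ /=.
  by rewrite pmin_cons pmin_minbase mulrA.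
rewrite -(TR n x (fun s => l (pmin m s))).
apply: ler_sum => q _; apply: ler_wpM2l; first exact: pathP_ge0.
by apply: hl; apply: pmin_take.
Qed.

Definition pset (tau : R) (v : V) := [set pval M tau sg v | sg in [set: pstrat V]]%classic.

Lemma pval_ub tau sg v : pval M tau sg v <= \sum_t `|ms_value M t| + `|tau|.
Proof.
elim: sg v => [|k IH] v /=.
  by apply: addr_ge0; [apply: sumr_ge0 => t _; exact: normr_ge0 | exact: normr_ge0].
case: ifP => Hv.
  have h1 : ms_value M v <= `|ms_value M v| := ler_norm _.
  have h2 : - tau <= `|tau| by rewrite -normrN; exact: ler_norm.
  have h3 : `|ms_value M v| <= \sum_t `|ms_value M t|.
    by rewrite (bigD1 v) //= lerDl; apply: sumr_ge0 => t _; exact: normr_ge0.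
  lra.
have hp := price_ge0 v (negbT Hv).
have h : \sum_w P v w * pval M tau (k w) w <= \sum_t `|ms_value M t| + `|tau|.
  rewrite -[X in _ <= X]mul1r -(P_sum1 v) mulr_suml; apply: ler_sum => w _.
  by apply: ler_wpM2l; [exact: P_ge0 | exact: IH].
lra.
Qed.

Lemma has_sup_pset tau v : has_sup (pset tau v).
Proof.
split; first by exists 0, (@PHalt V).
by exists (\sum_t `|ms_value M t| + `|tau|) => y [sg _ <-]; exact: pval_ub.
Qed.

Lemma pval_le_U tau sg v : pval M tau sg v <= Uopt M tau v.
Proof. by apply: (sup_upper_bound (has_sup_pset tau v)); exists sg. Qed.

Lemma U_ge0 tau v : 0 <= Uopt M tau v.
Proof. exact: (pval_le_U tau (@PHalt V) v). Qed.

Lemma U_dest tau t : t \in ms_dest M -> ms_value M t - tau <= Uopt M tau t.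
Proof. by move=> Ht; have := pval_le_U tau (@PPlay V (fun _ => @PHalt V)) t; rewrite /= Ht. Qed.

Lemma U_bellman tau u : u \notin ms_dest M ->
  - ms_price M u + \sum_w P u w * Uopt M tau w <= Uopt M tau u.
Proof.
move=> Hu; apply/ler_addgt0Pr => e e0.
have H : forall w, exists sg, Uopt M tau w - e < pval M tau sg w.
  move=> w; have [y [sg _ <-] Hy] := sup_adherent e0 (has_sup_pset tau w).
  by exists sg; exact: Hy.
have [f Hf] := choice H.
have := pval_le_U tau (@PPlay V f) u; rewrite /= (negbTE Hu) => Hle.
have : \sum_w P u w * Uopt M tau w <= \sum_w P u w * pval M tau (f w) w + e.
  rewrite -[X in _ <= _ + X]mul1r -(P_sum1 u) mulr_suml -big_split /=.
  apply: ler_sum => w _; rewrite -mulrDr; apply: ler_wpM2l; first exact: P_ge0.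
  have := Hf w; lra.
lra.
Qed.

Lemma pval_lip tau d sg v : 0 <= d -> pval M tau sg v <= pval M (tau + d) sg v + d.
Proof.
move=> d0; elim: sg v => [|k IH] v /=; first by rewrite add0r.
case: ifP => Hv; first lra.
have : \sum_w P v w * pval M tau (k w) w <= \sum_w P v w * pval M (tau + d) (k w) w + d.
  rewrite -[X in _ <= _ + X]mul1r -(P_sum1 v) mulr_suml -big_split /=.
  apply: ler_sum => w _; rewrite -mulrDr; apply: ler_wpM2l; [exact: P_ge0 | exact: IH].
lra.
Qed.

Lemma pval_big tau sg v : (forall t, t \in ms_dest M -> ms_value M t <= tau) ->
  pval M tau sg v <= 0.
Proof.
move=> Ht; elim: sg v => [|k IH] v /=; first done.
case: ifP => Hv; first by have := Ht v Hv; lra.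
have := price_ge0 v (negbT Hv).
have : \sum_w P v w * pval M tau (k w) w <= 0.
  apply: (@le_trans _ _ (\sum_(w : V) (0:R))); last by rewrite big1. apply: ler_sum => w _.
  by apply: mulr_ge0_le0; [exact: P_ge0 | exact: IH].
lra.
Qed.

Lemma U_grade v : Uopt M (grade M v) v <= 0.
Proof.
set B0 := \sum_t `|ms_value M t|.
have EB : forall tau, 0 < Uopt M tau v -> tau <= B0.
  move=> tau Et; rewrite leNgt; apply/negP => Hlt.
  have : Uopt M tau v <= 0.
    rewrite /Uopt; apply: ge_sup; first by exists 0, (@PHalt V).
    move=> y [sg _ <-]; apply: pval_big => t Ht.
    have : ms_value M t <= `|ms_value M t| := ler_norm _.
    have : `|ms_value M t| <= B0.
      by rewrite /B0 (bigD1 t) //= lerDl; apply: sumr_ge0 => *; exact: normr_ge0.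
    lra.
  lra.
have key : forall tau, grade M v < tau -> Uopt M tau v <= 0.
  move=> tau Ht; rewrite leNgt; apply/negP => Hpos.
  have HE : has_sup [set tau : R | 0 < Uopt M tau v]%classic.
    by split; [exists tau | exists B0 => y /= Hy; exact: EB].
  have : tau <= grade M v by exact: (sup_upper_bound HE Hpos).
  lra.
rewrite /Uopt; apply: ge_sup; first by exists 0, (@PHalt V).
move=> y [sg _ <-]; apply/ler_addgt0Pr => e e0; rewrite add0r.
have := pval_lip (grade M v) e sg v (ltW e0).
have := pval_le_U (grade M v + e) sg v.
have := key (grade M v + e); rewrite ltrDl => /(_ e0).
lra.
Qed.

Lemma marg n x (b : n.-tuple V) :
  \sum_(a : n.+1.-tuple V | trunc a == b) Defs.pathP M x a = Defs.pathP M x b.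
Proof.
rewrite big_mkcond /=.
transitivity (\sum_(a : n.+1.-tuple V) Defs.pathP M x a * ((take n a == val b)%:R)).
  apply: eq_bigr => a _; rewrite -val_eqE /=; case: ifP => _; by rewrite ?mulr1 ?mulr0.
rewrite (TR n x (fun s => (s == val b)%:R)).
rewrite (bigD1 b) //= eqxx mulr1 big1 ?addr0 // => q /negbTE.
by rewrite val_eqE => ->; rewrite mulr0.
Qed.

End Sys.
Arguments pmin {R} M m s.
Arguments P_ge0 {R M}.
Arguments P_sum1 {R M}.
Arguments P_abs {R M}.
Arguments price_ge0 {R M}.
Arguments P_dest {R M}.
Arguments pmin_cons {R M}.
Arguments pmin_nil {R M}.
Arguments pmin_le {R M}.
Arguments pmin_minbase {R M}.
Arguments pmin_take {R M}.
Arguments pmin_const {R M}.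
Arguments pathP_ge0 {R M}.
Arguments pathP_dest {R M}.
Arguments sum_pathP {R M}.
Arguments TR {R M}.
Arguments SS {R M}.
Arguments pval_ub {R M}.
Arguments has_sup_pset {R M}.
Arguments pval_le_U {R M}.
Arguments U_ge0 {R M}.
Arguments U_dest {R M}.
Arguments U_bellman {R M}.
Arguments pval_lip {R M}.
Arguments pval_big {R M}.
Arguments U_grade {R M}.
Arguments marg {R M}.

Section Joint.
Variable R : realType.
Variable J : finType.
Variable S : J -> MarkovSystem R.
Variables (F : {set {set J}}) (h : {set J} -> R).
Hypothesis HS : forall i, markov_system (S i).

Lemma bigmax_ge_seq (T : eqType) (r : seq T) (P : pred T) (f : T -> R) x0 a :
  a \in r -> P a -> f a <= \big[Num.max/x0]_(i <- r | P i) f i.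
Proof.
elim: r => [|b r IH] //=; rewrite in_cons big_cons => /orP [/eqP <- | Ha] Pa.
  by rewrite Pa le_max lexx.
case: ifP => _; last exact: IH.
by rewrite le_max IH ?orbT.
Qed.

Lemma bigmax_ge0_seq (T : Type) (r : seq T) (P : pred T) (f : T -> R) x0 :
  x0 <= \big[Num.max/x0]_(i <- r | P i) f i.
Proof.
elim: r => [|b r IH]; first by rewrite big_nil.
by rewrite big_cons; case: ifP => _ //; rewrite le_max IH orbT.
Qed.

Lemma maxF_ge A y : A \in F -> semiadd h A y <= maxF F h y.
Proof. move=> HA; rewrite /maxF. apply: (@bigmax_ge_seq {set J} (index_enum _) (fun I => I \in F)); [exact: mem_index_enum | exact: HA]. Qed.

Lemma maxF_lb y : h finset.set0 <= maxF F h y.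
Proof.
rewrite /maxF; apply: le_trans (@bigmax_ge0_seq {set J} (index_enum _) (fun I => I \in F) (fun I => semiadd h I y) _).
by rewrite /semiadd big_set0 add0r.
Qed.

Lemma maxF_mono y y' : (forall i, y i <= y' i) -> maxF F h y <= maxF F h y'.
Proof.
move=> Hy; rewrite /maxF; apply: (big_ind2 (fun a b => a <= b)).
- by rewrite /semiadd lerD2r; apply: ler_sum.
- by move=> *; exact: le_max2.
- by move=> I _; rewrite /semiadd lerD2r; apply: ler_sum => i _; exact: Hy.
Qed.

Definition Tn n (x : forall i, ms_state (S i)) (m : J -> R) : R :=
  \sum_(p : {dffun forall i : J, n.-tuple (ms_state (S i))})
     (\prod_(i : J) Defs.pathP (S i) (x i) (p i)) * maxF F h (fun i => pmin (S i) (m i) (p i)).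

Lemma sum_w n (x : forall i, ms_state (S i)) :
  \sum_(p : {dffun forall i : J, n.-tuple (ms_state (S i))})
     \prod_(i : J) Defs.pathP (S i) (x i) (p i) = 1.
Proof.
rewrite (D0 J (fun i => n.-tuple (ms_state (S i))) (fun i q => Defs.pathP (S i) (x i) q)).
rewrite big1 // => i _; exact (sum_pathP (HS i) n (x i)).
Qed.

Lemma Tn_lb n x m : h finset.set0 <= Tn n x m.
Proof.
rewrite /Tn -[X in X <= _]mul1r -{1}(sum_w n x) mulr_suml; apply: ler_sum => p _.
apply: ler_wpM2l; last exact: maxF_lb.
by apply: prodr_ge0 => i _; exact: (pathP_ge0 (HS i)).
Qed.

Lemma LBdest n x m A : A \in F -> (forall i, i \in A -> x i \in ms_dest (S i)) ->
  (forall i, i \in A -> m i <= grade (S i) (x i)) ->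
  \sum_(i in A) m i + h A <= Tn n x m.
Proof.
move=> HA Hd Hm.
rewrite /Tn -[X in X <= _]mul1r -{1}(sum_w n x) mulr_suml; apply: ler_sum => p _.
have [->|nz] := eqVneq (\prod_i Defs.pathP (S i) (x i) (p i)) 0; first by rewrite !mul0r.
apply: ler_wpM2l; first by apply: prodr_ge0 => i _; exact: (pathP_ge0 (HS i)).
apply: le_trans _ (maxF_ge A (fun i => pmin (S i) (m i) (p i)) HA); rewrite /semiadd lerD2r.
apply: ler_sum => i Hi.
have nzi : Defs.pathP (S i) (x i) (p i) != 0.
  apply/negP => /eqP H0; move: nz; rewrite (bigD1 i) //= H0 mul0r eqxx //.
by rewrite (pmin_const (m i) (x i) (p i) (pathP_dest (HS i) (x i) (p i) (Hd i Hi) nzi) (Hm i Hi)).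
Qed.

Lemma Tmono n x m : Tn n.+1 x m <= Tn n x m.
Proof.
rewrite /Tn.
apply: (@le_trans _ _ (\sum_(p : {dffun forall i, n.+1.-tuple (ms_state (S i))})
   (\prod_i Defs.pathP (S i) (x i) (p i)) *
   maxF F h (fun i => pmin (S i) (m i)
     ((finfun (fun j => trunc (p j)) : {dffun forall i, n.-tuple (ms_state (S i))}) i)))).
  apply: ler_sum => p _; apply: ler_wpM2l.
    by apply: prodr_ge0 => i _; exact: (pathP_ge0 (HS i)).
  by apply: maxF_mono => i; rewrite ffunE /=; exact: pmin_take.
have := PF J (fun i => n.+1.-tuple (ms_state (S i))) (fun i => n.-tuple (ms_state (S i)))
  (fun i q => trunc q) (fun i q => Defs.pathP (S i) (x i) q)
  (fun p' => maxF F h (fun i => pmin (S i) (m i) (p' i))).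
move=> ->; rewrite le_eqVlt; apply/orP; left; apply/eqP; apply: eq_bigr => p' _; congr (_ * _).
apply: eq_bigr => i _; exact (marg (HS i) n (x i) (p' i)).
Qed.

Definition mupd (m : J -> R) (i : J) (a : R) : J -> R := fun j => if j == i then a else m j.

Lemma Ki n (x : forall i, ms_state (S i)) m i :
  \sum_w ms_P (S i) (x i) w *
     Tn n (@eqtype.dfwith J (fun j => ms_state (S j)) x i w)
          (mupd m i (Num.min (m i) (grade (S i) w)))
  <= Tn n x m.
Proof.
pose q0 : n.-tuple (ms_state (S i)) := nseq_tuple n (x i).
pose C (p : {dffun forall j, n.-tuple (ms_state (S j))}) :=
  \prod_(j | j != i) Defs.pathP (S j) (x j) (p j).
pose l (p : {dffun forall j, n.-tuple (ms_state (S j))}) (z : R) :=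
  maxF F h (fun j => if j == i then z else pmin (S j) (m j) (p j)).
have fact : forall (p : {dffun forall j, n.-tuple (ms_state (S j))})
    (y : forall j, ms_state (S j)) (m' : J -> R) (q : n.-tuple (ms_state (S i))),
   (forall j, i != j -> y j = x j) -> (forall j, j != i -> m' j = m j) ->
   (\prod_j Defs.pathP (S j) (y j) (upd p q j)) *
     maxF F h (fun j => pmin (S j) (m' j) (upd p q j))
   = C p * (Defs.pathP (S i) (y i) q * l p (pmin (S i) (m' i) q)).
  move=> p y m' q Hy Hm'.
  rewrite (bigD1 i) //= updE_in.
  have -> : \prod_(j | j != i) Defs.pathP (S j) (y j) (upd p q j) = C p.
    by apply: eq_bigr => j ne; rewrite Hy ?updE_out // eq_sym.
  have -> : (fun j => pmin (S j) (m' j) (upd p q j)) =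
      (fun j => if j == i then pmin (S i) (m' i) q else pmin (S j) (m j) (p j)).
    apply: funext => j; case: (eqVneq j i) => [->|ne]; first by rewrite updE_in.
    by rewrite Hm' // updE_out // eq_sym.
  by rewrite -mulrA mulrCA.
rewrite /Tn.
rewrite [X in _ <= X](SL q0).
under eq_bigr => w _ do rewrite (SL q0) mulr_sumr.
rewrite exchange_big /=; apply: ler_sum => p _.
apply: (@le_trans _ _ (\sum_w ms_P (S i) (x i) w * (C p * \sum_(q : n.-tuple (ms_state (S i))) Defs.pathP (S i) w q * l p (pmin (S i) (Num.min (m i) (grade (S i) w)) q)))).
  rewrite le_eqVlt; apply/orP; left; apply/eqP; apply: eq_bigr => w _; congr (_ * _).
  rewrite mulr_sumr; apply: eq_bigr => q _; rewrite fact.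
  - by rewrite dfwith_in /mupd eqxx.
  - by move=> j ne; rewrite dfwith_out.
  - by move=> j ne; rewrite /mupd (negbTE ne).
apply: (@le_trans _ _ (C p * \sum_(q : n.-tuple (ms_state (S i))) Defs.pathP (S i) (x i) q * l p (pmin (S i) (m i) q))); last first.
  rewrite le_eqVlt; apply/orP; left; apply/eqP.
  rewrite mulr_sumr; apply: eq_bigr => q _; symmetry; exact: fact.
under eq_bigr do rewrite mulrCA.
rewrite -mulr_sumr; apply: ler_wpM2l.
  by apply: prodr_ge0 => j _; exact: (pathP_ge0 (HS j)).
apply: (SS (HS i)) => a b ab; apply: maxF_mono => j; by case: (j == i).
Qed.

Lemma main_ind n (sg : strat J (fun i => ms_state (S i))) :
  forall (x : forall i, ms_state (S i)) (m : J -> R),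
  svalid S F sg x -> (forall i, m i <= grade (S i) (x i)) ->
  sutil S h sg x <= Tn n x m + \sum_i Uopt (S i) (m i) (x i).
Proof.
elim: sg => [A | i k IH] x m /= Hv Hm.
  case: Hv => HA Hd.
  have L := LBdest n x m A HA Hd (fun i _ => Hm i).
  rewrite /semiadd [X in _ <= _ + X](bigID (fun j => j \in A)) /=.
  have h1 : \sum_(j in A) ms_value (S j) (x j) - \sum_(j in A) m j
      <= \sum_(j in A) Uopt (S j) (m j) (x j).
    rewrite -sumrB; apply: ler_sum => j Hj; exact: (U_dest (HS j) (m j) (x j) (Hd j Hj)).
  have h2 : 0 <= \sum_(j | j \notin A) Uopt (S j) (m j) (x j).
    by apply: sumr_ge0 => j _; exact: (U_ge0 (HS j)).
  lra.
case: Hv => Hnd Hv.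
set C' := \sum_(j | j != i) Uopt (S j) (m j) (x j).
have S5 : \sum_j Uopt (S j) (m j) (x j) = Uopt (S i) (m i) (x i) + C' by rewrite (bigD1 i).
have S1 : \sum_w ms_P (S i) (x i) w * sutil S h (k w) (@eqtype.dfwith J (fun j => ms_state (S j)) x i w)
   <= \sum_w ms_P (S i) (x i) w * (Tn n (@eqtype.dfwith J (fun j => ms_state (S j)) x i w)
          (mupd m i (Num.min (m i) (grade (S i) w))) +
          (Uopt (S i) (Num.min (m i) (grade (S i) w)) w + C')).
  apply: ler_sum => w _.
  have := P_ge0 (HS i) (x i) w; rewrite le_eqVlt => /orP [/eqP <- | Pp]; first by rewrite !mul0r.
  apply: ler_wpM2l; first exact: ltW.
  apply: le_trans (IH w (@eqtype.dfwith J (fun j => ms_state (S j)) x i w)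
      (mupd m i (Num.min (m i) (grade (S i) w))) (Hv w Pp) _) _.
    move=> j; rewrite /mupd; case: (eqVneq j i) => [->|ne].
      by rewrite dfwith_in ge_min lexx orbT.
    by rewrite dfwith_out 1?eq_sym //; exact: Hm.
  rewrite lerD2l (bigD1 i) //= dfwith_in /mupd eqxx lerD2l.
  rewrite le_eqVlt; apply/orP; left; apply/eqP; apply: eq_bigr => j ne.
  by rewrite (negbTE ne) dfwith_out // eq_sym.
have S2 := Ki n x m i.
have S3 : \sum_w ms_P (S i) (x i) w * Uopt (S i) (Num.min (m i) (grade (S i) w)) w
    <= \sum_w ms_P (S i) (x i) w * Uopt (S i) (m i) w.
  apply: ler_sum => w _; apply: ler_wpM2l; first exact: (P_ge0 (HS i)).
  case: (leP (m i) (grade (S i) w)) => H; first by [].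
  exact: le_trans (U_grade (HS i) w) (U_ge0 (HS i) _ _).
have S4 := U_bellman (HS i) (m i) (x i) Hnd.
have E : \sum_w ms_P (S i) (x i) w * (Tn n (@eqtype.dfwith J (fun j => ms_state (S j)) x i w)
          (mupd m i (Num.min (m i) (grade (S i) w))) +
          (Uopt (S i) (Num.min (m i) (grade (S i) w)) w + C'))
   = \sum_w ms_P (S i) (x i) w * Tn n (@eqtype.dfwith J (fun j => ms_state (S j)) x i w)
          (mupd m i (Num.min (m i) (grade (S i) w)))
     + \sum_w ms_P (S i) (x i) w * Uopt (S i) (Num.min (m i) (grade (S i) w)) w + C'.
  rewrite -[C' in RHS]mul1r -(P_sum1 (HS i) (x i)) mulr_suml -!big_split /=.
  by apply: eq_bigr => w _; rewrite !mulrDr addrA.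
rewrite S5; lra.
Qed.

End Joint.

Theorem lemma1 (R : realType) (J : finType) (S : J -> MarkovSystem R)
    (F : {set {set J}}) (h : {set J} -> R) :
  (forall i, markov_system (S i)) ->
  (forall i t, t \in ms_dest (S i) -> 0 <= ms_value (S i) t) ->
  F != (finset.set0 : {set {set J}}) -> downward_closed F ->
  forall sg : strat J (fun i => ms_state (S i)),
    svalid S F sg (jstart S) ->
    sutil S h sg (jstart S) <= exp_prevailing S F h.
Proof.
move=> HS _ _ _ sg Hv.
have Hn : forall n, sutil S h sg (jstart S) <= exp_prevailing_n S F h n.
  move=> n.
  have H1 := @main_ind _ _ _ F h HS n sg (jstart S) (fun i => grade (S i) (ms_start (S i))) Hv (fun i => lexx _).
  have H2 : \sum_i Uopt (S i) (grade (S i) (ms_start (S i))) (jstart S i) <= 0.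
    apply: (@le_trans _ _ (\sum_(i : J) (0:R))); last by rewrite big1.
    apply: ler_sum => i _; exact: (U_grade (HS i)).
  have -> : exp_prevailing_n S F h n = Tn R J S F h n (jstart S) (fun i => grade (S i) (ms_start (S i))) by [].
  lra.
have cv : cvgn (exp_prevailing_n S F h).
  apply: nonincreasing_is_cvgn.
    by apply/nonincreasing_seqP => n; exact: (@Tmono _ _ _ F h HS).
  by exists (h finset.set0) => y [n _ <-]; exact: (@Tn_lb _ _ _ F h HS).
rewrite /exp_prevailing; apply: limr_ge => //; exact: nearW.
Qed.
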